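(* Let $q\in\mathbb{C}$, $|q|<1$, $\ell\in\mathbb{N}$, $\alpha_j,\beta_j\in\mathbb{N}$ for $j=1,\dots,\ell$. For $k\ge1$ and a tuple $\mathbf{r}=(r_1,\dots,r_m)\in\mathbb{Z}_{\ge0}^m$ define $$\Psi_k(\mathbf{r})=(-1)^k\Big(\sum_{j=2}^k(-1)^j\,\mathfrak{z}_q^{(j-1,r_1,\dots,r_m)}[j,r_1,\dots,r_m]-\mathfrak{z}_q^{(1,r_1,\dots,r_m)}[1,r_1,\dots,r_m]\Big).$$ Then $$\Psi_{\alpha_1}(0^{\beta_1-1},\alpha_2,0^{\beta_2-1},\dots,\alpha_\ell,0^{\beta_\ell-1})=\Psi_{\beta_\ell}(0^{\alpha_\ell-1},\beta_{\ell-1},0^{\alpha_{\ell-1}-1},\dots,\beta_1,0^{\alpha_1-1}),$$ where $0^n$ denotes $n$ consecutive zeros. (In the paper's word notation: $\zeta^{\widetilde{\mathrm{IV}}}[\varphi_{\alpha_1}y^{\beta_1-1}\rho^{\alpha_2}y^{\beta_2}\cdots\rho^{\alpha_\ell}y^{\beta_\ell}]=\zeta^{\widetilde{\mathrm{IV}}}[\varphi_{\beta_\ell}y^{\alpha_\ell-1}\rho^{\beta_{\ell-1}}y^{\alpha_{\ell-1}}\cdots\rho^{\beta_1}y^{\alpha_1}]$ with $\varphi_k=(-1)^k(\sum_{j=2}^k(-1)^jz_j-\theta)$.)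
   Context: $\mathfrak{z}_q^{\mathbf{t}}[\mathbf{s}]=\sum_{k_1>\dots>k_d>0}\prod_j\frac{q^{k_jt_j}}{(1-q^{k_j})^{s_j}}$. The values $\mathfrak{z}_q^{(j-1,\mathbf{r})}[j,\mathbf{r}]$ ($j\ge2$) are type IV values and $\mathfrak{z}_q^{(1,\mathbf{r})}[1,\mathbf{r}]$ the regularizing type II values; in word form $z_j=\rho^{j-1}\pi y$, $\theta=\rho y$, with a type-$\widetilde{\mathrm{IV}}$ word $z_j\rho^{r_1}y\cdots\rho^{r_m}y$ (resp. $\theta\rho^{r_1}y\cdots\rho^{r_m}y$) realized as $\mathfrak{z}_q^{(j-1,\mathbf{r})}[j,\mathbf{r}]$ (resp. $\mathfrak{z}_q^{(1,\mathbf{r})}[1,\mathbf{r}]$). For $k=1$ the sum over $j$ is empty. *)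

(* Defs.v *)
From Stdlib Require Import Reals List.
From Coquelicot Require Import Coquelicot.
Import ListNotations.
Open Scope C_scope.

(** Truncated multiple q-sum:
    sum over N >= k_1 > ... > k_d > 0 of prod_j q^(k_j t_j) / (1 - q^(k_j))^(s_j),
    where ts = [(t_1,s_1); ...; (t_d,s_d)]. *)
Fixpoint zq_trunc (q : C) (ts : list (nat * nat)) (N : nat) : C :=
  match ts with
  | [] => 1
  | (t, s) :: rest =>
      (fix aux (n : nat) : C :=
         match n with
         | O => 0
         | S m => aux m + (q ^ (S m * t) / (1 - q ^ (S m)) ^ s) * zq_trunc q rest m
         end) N
  end.

Definition Clim_seq (u : nat -> C) : C :=
  @lim (CompleteNormedModule.CompleteSpace _ C_CompleteNormedModule)
       (filtermap u eventually).

Definition zq (q : C) (t s : list nat) : C :=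
  Clim_seq (fun N => zq_trunc q (combine t s) N).

Definition Psi (q : C) (k : nat) (r : list nat) : C :=
  (- 1) ^ k *
  (sum_n_m (fun j => (- 1) ^ j * zq q ((j - 1)%nat :: r) (j :: r)) 2 k
   - zq q (1%nat :: r) (1%nat :: r)).

Definition zeros (n : nat) : list nat := repeat 0%nat n.

(* Main.v *)
Require Import Defs.
From Stdlib Require Import Reals List.
From Coquelicot Require Import Coquelicot.
Import ListNotations.
Open Scope C_scope.
From Stdlib Require Import Reals List Lra Lia.
From Coquelicot Require Import Coquelicot.

Lemma lim_ratio_pow (p : nat) :
  is_lim_seq (fun n => ((INR n + 3) / (INR n + 2)) ^ p)%R 1%R.
Proof.
  assert (H1 : is_lim_seq (fun n => ((INR n + 3) / (INR n + 2)))%R 1%R).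
  { apply is_lim_seq_ext with (fun n => 1 + / (INR n + 2))%R.
    { intro n. field. pose proof (pos_INR n). lra. }
    assert (Hi : is_lim_seq (fun n => / (INR n + 2))%R 0%R).
    { apply (is_lim_seq_inv (fun n => INR n + 2)%R p_infty).
      - eapply is_lim_seq_plus. apply is_lim_seq_INR. apply is_lim_seq_const.
        reflexivity.
      - discriminate. }
    pose proof (is_lim_seq_plus' _ _ 1%R 0%R (is_lim_seq_const 1%R) Hi) as H.
    rewrite Rplus_0_r in H. exact H. }
  induction p as [|p IH].
  - simpl. apply is_lim_seq_const.
  - replace 1%R with (1 * 1)%R by ring.
    apply is_lim_seq_ext with (fun n => ((INR n + 3) / (INR n + 2)) * (((INR n + 3) / (INR n + 2)) ^ p))%R.
    { intro n. reflexivity. }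
    apply is_lim_seq_mult'; assumption.
Qed.

Lemma ex_series_pg_pos (p : nat) (r : R) : (0 < r < 1)%R ->
  ex_series (fun n => (INR n + 2) ^ p * r ^ n)%R.
Proof.
  intros Hr.
  apply ex_series_ext with (fun n => Rabs ((INR n + 2) ^ p * r ^ n))%R.
  { intro n. apply Rabs_pos_eq. apply Rmult_le_pos; apply pow_le;
    pose proof (pos_INR n); lra. }
  apply ex_series_DAlembert with r.
  - lra.
  - intro n. apply Rmult_integral_contrapositive. split; apply pow_nonzero;
    pose proof (pos_INR n); lra.
  - apply is_lim_seq_ext with (fun n => ((INR n + 3) / (INR n + 2)) ^ p * r)%R.
    { intro n. rewrite S_INR. pose proof (pos_INR n).
      assert (Hx : ((INR n + 2)^p <> 0)%R) by (apply pow_nonzero; lra).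
      assert (Hy : (r^n <> 0)%R) by (apply pow_nonzero; lra).
      rewrite Rabs_pos_eq.
      - unfold Rdiv at 1. rewrite Rpow_mult_distr, pow_inv. change (r ^ S n)%R with (r * r ^ n)%R.
        replace (INR n + 1 + 2)%R with (INR n + 3)%R by ring. field. split; auto.
      - apply Rmult_le_pos. apply Rmult_le_pos; apply pow_le; lra.
        left. apply Rinv_0_lt_compat. apply Rmult_lt_0_compat; apply pow_lt; lra. }
    pose proof (is_lim_seq_mult' _ _ 1%R r (lim_ratio_pow p) (is_lim_seq_const r)) as H.
    rewrite Rmult_1_l in H. exact H.
Qed.

Lemma ex_series_pg (p : nat) (r : R) : (0 <= r < 1)%R ->
  ex_series (fun n => (INR n + 2) ^ p * r ^ n)%R.
Proof.
  intros Hr.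
  apply (@ex_series_le R_AbsRing R_CompleteNormedModule) with (fun n => (INR n + 2) ^ p * ((1 + r)/2) ^ n)%R.
  - intro n. change norm with Rabs. pose proof (pos_INR n).
    rewrite Rabs_pos_eq.
    + apply Rmult_le_compat_l. apply pow_le; lra. apply pow_incr; lra.
    + apply Rmult_le_pos; apply pow_le; lra.
  - apply ex_series_pg_pos. lra.
Qed.

Lemma lim_pg (p : nat) (r : R) : (0 <= r < 1)%R ->
  is_lim_seq (fun n => (INR n + 2) ^ p * r ^ n)%R 0%R.
Proof. intro Hr. apply ex_series_lim_0. apply ex_series_pg; auto. Qed.
From Stdlib Require Import Reals List Lra Lia.
From Coquelicot Require Import Coquelicot.
Open Scope C_scope.

Definition cv (u : nat -> C) (l : C) := forall eps : R, (0 < eps)%R ->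
  exists N, forall n, (N <= n)%nat -> (Cmod (u n - l) < eps)%R.

Lemma cv_filterlim u l : cv u l -> filterlim u eventually (locally l).
Proof.
  intros H. apply filterlim_locally. intros eps.
  destruct (H eps (cond_pos eps)) as [N HN]. exists N. intros n Hn.
  apply (norm_compat1 (V := C_NormedModule)). apply HN. auto.
Qed.

Lemma filterlim_cv u l : filterlim u eventually (locally l) -> cv u l.
Proof.
  intros H eps Heps.
  assert (Hf : (0 < norm_factor (V := C_NormedModule))%R) by apply norm_factor_gt_0.
  assert (He : (0 < eps / norm_factor (V := C_NormedModule))%R) by (apply Rdiv_lt_0_compat; auto).
  pose proof (proj1 (filterlim_locally u l) H (mkposreal _ He)) as [N HN].
  exists N. intros n Hn. specialize (HN n Hn).
  pose proof (norm_compat2 (V := C_NormedModule) _ _ _ HN) as H2. simpl in H2.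
  change (Cmod (u n - l)) with (norm (minus (u n) l)).
  replace eps with (norm_factor (V := C_NormedModule) * (eps / norm_factor (V := C_NormedModule)))%R.
  exact H2. field. lra.
Qed.

Lemma cv_Clim u l : cv u l -> Clim_seq u = l.
Proof.
  intros H. unfold Clim_seq.
  set (F := filtermap u eventually).
  assert (PF : ProperFilter F).
  { apply filtermap_proper_filter. apply eventually_filter. }
  assert (Hc : @cauchy (CompleteNormedModule.CompleteSpace _ C_CompleteNormedModule) F).
  { intros eps. exists l. pose proof (proj1 (filterlim_locally u l) (cv_filterlim u l H) eps). exact H0. }
  pose proof (@complete_cauchy (CompleteNormedModule.CompleteSpace _ C_CompleteNormedModule) F PF Hc) as Hl.
  assert (L1 : filterlim u eventually (locally (@lim (CompleteNormedModule.CompleteSpace _ C_CompleteNormedModule) F))).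
  { apply filterlim_locally. intro eps. exact (Hl eps). }
  assert (Pr : ProperFilter' (@eventually)).
  { apply Proper_StrongProper. apply eventually_filter. }
  exact (filterlim_locally_unique (K := C_AbsRing) (V := C_NormedModule) u _ _ L1 (cv_filterlim u l H)).
Qed.
Open Scope C_scope.

Fixpoint psum (f : nat -> C) (k : nat) : C :=
  match k with O => 0 | S k => psum f k + f k end.

Lemma psum_ext f g k : (forall j, (j < k)%nat -> f j = g j) -> psum f k = psum g k.
Proof. induction k; simpl; intros H; auto. rewrite IHk by (intros; apply H; lia). rewrite H by lia. auto. Qed.

Lemma psum_plus f g k : psum (fun j => f j + g j) k = psum f k + psum g k.
Proof. induction k; simpl. ring. rewrite IHk. ring. Qed.

Lemma psum_minus f g k : psum (fun j => f j - g j) k = psum f k - psum g k.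
Proof. induction k; simpl. ring. rewrite IHk. ring. Qed.

Lemma psum_scal c f k : psum (fun j => c * f j) k = c * psum f k.
Proof. induction k; simpl. ring. rewrite IHk. ring. Qed.

Lemma psum_scal_r c f k : psum (fun j => f j * c) k = psum f k * c.
Proof. induction k; simpl. ring. rewrite IHk. ring. Qed.

Lemma psum_zero k : psum (fun _ => 0) k = 0.
Proof. induction k; simpl; auto. rewrite IHk. ring. Qed.

Lemma psum_shift f k : psum f (S k) = f O + psum (fun j => f (S j)) k.
Proof. induction k. simpl. ring. change (psum f (S (S k))) with (psum f (S k) + f (S k)).
  rewrite IHk. simpl. ring. Qed.

Lemma psum_swap (f : nat -> nat -> C) n m :
  psum (fun k => psum (fun j => f k j) m) n = psum (fun j => psum (fun k => f k j) n) m.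
Proof.
  induction n; simpl.
  - rewrite psum_zero. auto.
  - rewrite IHn, <- psum_plus. auto.
Qed.

Lemma sum_n_psum (f : nat -> C) N : sum_n f N = psum f (S N).
Proof.
  induction N.
  - rewrite sum_O. simpl. rewrite Cplus_0_l. reflexivity.
  - rewrite sum_Sn, IHN. reflexivity.
Qed.

Lemma psum_bound f k M : (forall j, (j < k)%nat -> (Cmod (f j) <= M)%R) ->
  (Cmod (psum f k) <= INR k * M)%R.
Proof.
  induction k; intros H.
  - simpl. rewrite Cmod_0. lra.
  - change (psum f (S k)) with (psum f k + f k). rewrite S_INR.
    eapply Rle_trans. apply Cmod_triangle.
    assert (H1 := IHk (fun j Hj => H j ltac:(lia))). assert (H2 := H k ltac:(lia)). lra.
Qed.

Lemma cv_ext u v l : (forall n, u n = v n) -> cv u l -> cv v l.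
Proof. intros E H eps He. destruct (H eps He) as [N HN]. exists N. intros. rewrite <- E. auto. Qed.

Lemma Cmod_sub_tri a b c : (Cmod (a - c) <= Cmod (a - b) + Cmod (b - c))%R.
Proof. replace (a - c) with ((a - b) + (b - c)) by ring. apply Cmod_triangle. Qed.

Lemma cv_plus u v a b : cv u a -> cv v b -> cv (fun n => u n + v n) (a + b).
Proof.
  intros Hu Hv eps He.
  destruct (Hu (eps/2)%R ltac:(lra)) as [N1 H1]. destruct (Hv (eps/2)%R ltac:(lra)) as [N2 H2].
  exists (N1 + N2)%nat. intros n Hn.
  replace (u n + v n - (a + b)) with ((u n - a) + (v n - b)) by ring.
  eapply Rle_lt_trans. apply Cmod_triangle.
  specialize (H1 n ltac:(lia)). specialize (H2 n ltac:(lia)). lra.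
Qed.

Lemma cv_diff u v l : cv u l -> cv (fun n => u n - v n) 0 -> cv v l.
Proof.
  intros Hu Hd eps He.
  destruct (Hu (eps/2)%R ltac:(lra)) as [N1 H1]. destruct (Hd (eps/2)%R ltac:(lra)) as [N2 H2].
  exists (N1 + N2)%nat. intros n Hn.
  replace (v n - l) with ((u n - l) - (u n - v n - 0)) by ring.
  eapply Rle_lt_trans. unfold Cminus at 1. eapply Rle_trans. apply Cmod_triangle.
  rewrite Cmod_opp. apply Rle_refl.
  specialize (H1 n ltac:(lia)). specialize (H2 n ltac:(lia)). lra.
Qed.

Lemma cv_bound0 u (b : nat -> R) : (forall n, (Cmod (u n) <= b n)%R) -> is_lim_seq b 0%R -> cv u 0.
Proof.
  intros Hb Hl eps He.
  apply is_lim_seq_spec in Hl. destruct (Hl (mkposreal eps He)) as [N HN].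
  exists N. intros n Hn. specialize (HN n Hn). simpl in HN.
  replace (u n - 0) with (u n) by ring. eapply Rle_lt_trans. apply Hb.
  apply Rabs_lt_between in HN. lra.
Qed.

Lemma series_cv (f : nat -> C) : ex_series (K := C_AbsRing) (V := C_NormedModule) f ->
  exists l, cv (fun N => psum f (S N)) l.
Proof.
  intros [l Hl]. exists l. apply filterlim_cv in Hl.
  eapply cv_ext; [|exact Hl]. intro n. apply sum_n_psum.
Qed.

Definition aa (q : C) (k : nat) : C := q ^ k / (1 - q ^ k).

Fixpoint ell (q : C) (w : list bool) (k : nat) : C :=
  match w with
  | nil => match k with O => 1 | S _ => 0 end
  | true :: w' => aa q k * ell q w' k
  | false :: w' => psum (ell q w') k
  end.

Definition DD q N u v :=
  psum (fun k => psum (fun m => ell q u k * ell q v m * q ^ (k * m)) (S N)) (S N).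
Definition E1 q N u v :=
  psum (fun k => ell q (true :: u) k * ell q (false :: v) (S N) * q ^ (k * N)) (S N).

Lemma aa0 q : aa q 0 = 0.
Proof.
  unfold aa. simpl. replace (1 - 1) with (RtoC 0) by ring.
  unfold Cdiv, Cinv, Cmult. simpl. apply injective_projections; simpl; unfold Rdiv; ring.
Qed.

Lemma ell_nonempty0 q w : w <> nil -> ell q w 0 = 0.
Proof.
  destruct w as [|[|] w]; intros H; simpl; try congruence.
  rewrite aa0. ring.
Qed.

Lemma Cpow_ne1 q k : (Cmod q < 1)%R -> 1 - q ^ (S k) <> 0.
Proof.
  intros Hq H. assert (E : q ^ S k = 1). { replace (q ^ S k) with (1 - (1 - q ^ S k)) by ring. rewrite H. ring. }
  assert (Cmod (q ^ S k) = 1%R) by (rewrite E; apply Cmod_1).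
  rewrite Cmod_pow in H0. assert (0 <= Cmod q)%R by apply Cmod_ge_0.
  assert (Cmod q ^ S k < 1)%R.
  { apply pow_lt_1_compat. lra. lia. }
  lra.
Qed.

Lemma geom_lemma (c : nat -> C) (x : C) N : 1 - x <> 0 ->
  psum (fun m => psum c m * x ^ m) (S N) =
  x / (1 - x) * psum (fun j => c j * x ^ j) (S N) - x / (1 - x) * x ^ N * psum c (S N).
Proof.
  intros Hx. induction N.
  - simpl. field. auto.
  - change (psum (fun m => psum c m * x ^ m) (S (S N))) with
      (psum (fun m => psum c m * x ^ m) (S N) + psum c (S N) * x ^ (S N)).
    rewrite IHN.
    change (psum (fun j => c j * x ^ j) (S (S N))) with
      (psum (fun j => c j * x ^ j) (S N) + c (S N) * x ^ (S N)).
    change (psum c (S (S N))) with (psum c (S N) + c (S N)).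
    rewrite !Cpow_S. field. auto.
Qed.

Lemma DD_sym q N u v : DD q N u v = DD q N v u.
Proof.
  unfold DD. rewrite psum_swap. apply psum_ext. intros j _. apply psum_ext. intros k _.
  rewrite Nat.mul_comm. ring.
Qed.

Lemma DD_nil_r q N u : DD q N u nil = psum (ell q u) (S N).
Proof.
  unfold DD. apply psum_ext. intros k _. rewrite psum_shift.
  rewrite (psum_ext _ (fun _ => 0)) by (intros; simpl; ring).
  rewrite psum_zero. rewrite Nat.mul_0_r. simpl. ring.
Qed.

Lemma DD_nil_l q N u : DD q N nil u = psum (ell q u) (S N).
Proof. rewrite DD_sym. apply DD_nil_r. Qed.

Lemma transA q N u v : (Cmod q < 1)%R -> u <> nil ->
  DD q N (true :: u) v = DD q N u (false :: v) + E1 q N u v.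
Proof.
  intros Hq Hu. unfold DD, E1. rewrite <- psum_plus. apply psum_ext. intros k _.
  simpl ell.
  destruct k as [|k].
  - rewrite (ell_nonempty0 q u Hu).
    rewrite (psum_ext _ (fun _ => 0)) by (intros; ring).
    rewrite (psum_ext (fun m => 0 * _ * _) (fun _ => 0)) by (intros; ring).
    rewrite psum_zero. ring.
  - set (x := q ^ S k).
    assert (Hx : 1 - x <> 0) by (apply Cpow_ne1; auto).
    rewrite (psum_ext (fun m => aa q (S k) * ell q u (S k) * ell q v m * q ^ (S k * m))
               (fun m => aa q (S k) * ell q u (S k) * (ell q v m * x ^ m)))
      by (intros; unfold x; rewrite Cpow_mult_r; ring).
    rewrite psum_scal.
    rewrite (psum_ext (fun m => ell q u (S k) * psum (ell q v) m * q ^ (S k * m))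
               (fun m => ell q u (S k) * (psum (ell q v) m * x ^ m)))
      by (intros; unfold x; rewrite Cpow_mult_r; ring).
    rewrite psum_scal. rewrite geom_lemma by auto.
    rewrite Cpow_mult_r. fold x. unfold aa. fold x.
    change (psum (ell q v) N + ell q v N) with (psum (ell q v) (S N)). ring.
Qed.

Lemma transY q N u v : (Cmod q < 1)%R -> v <> nil ->
  DD q N (false :: u) v = DD q N u (true :: v) - E1 q N v u.
Proof.
  intros Hq Hv. rewrite DD_sym, (DD_sym q N u). rewrite transA by auto. ring.
Qed.

Lemma pow_le1 (x : R) n : (0 <= x <= 1)%R -> (x ^ n <= 1)%R.
Proof. intros H. rewrite <- (pow1 n). apply pow_incr. lra. Qed.

Lemma Cmod_1_minus z : (1 - Cmod z <= Cmod (1 - z))%R.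
Proof.
  pose proof (Cmod_triangle (1 - z) z) as H. replace (1 - z + z) with (RtoC 1) in H by ring.
  rewrite Cmod_1 in H. lra.
Qed.

Lemma aa_bound q k : (Cmod q < 1)%R ->
  (Cmod (aa q k) <= / (1 - Cmod q) * Cmod q ^ k)%R.
Proof.
  intros Hq. pose proof (Cmod_ge_0 q) as H0.
  assert (HB : (0 < / (1 - Cmod q))%R) by (apply Rinv_0_lt_compat; lra).
  destruct k as [|k].
  - rewrite aa0, Cmod_0. apply Rmult_le_pos. lra. apply pow_le. lra.
  - unfold aa. rewrite Cmod_div by (apply Cpow_ne1; auto). rewrite Cmod_pow.
    unfold Rdiv. rewrite Rmult_comm. apply Rmult_le_compat_r. apply pow_le; lra.
    apply Rinv_le_contravar. lra.
    eapply Rle_trans; [|apply Cmod_1_minus]. rewrite Cmod_pow.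
    assert (Cmod q ^ S k <= Cmod q)%R.
    { change (Cmod q ^ S k)%R with (Cmod q * Cmod q ^ k)%R. pose proof (pow_le1 (Cmod q) k ltac:(lra)). pose proof (pow_le (Cmod q) k H0). nra. }
    lra.
Qed.

Lemma B_ge1 q : (Cmod q < 1)%R -> (1 <= / (1 - Cmod q))%R.
Proof.
  intros Hq. pose proof (Cmod_ge_0 q).
  rewrite <- Rinv_1. apply Rinv_le_contravar; lra.
Qed.

Lemma ell_bound q w k : (Cmod q < 1)%R ->
  (Cmod (ell q w k) <= (/ (1 - Cmod q) * INR (S k)) ^ length w)%R.
Proof.
  intros Hq. pose proof (B_ge1 q Hq) as HB. pose proof (Cmod_ge_0 q) as H0.
  set (B := (/ (1 - Cmod q))%R) in *.
  revert k. induction w as [|[|] w IH]; intros k.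
  - simpl. destruct k; [rewrite Cmod_1 | rewrite Cmod_0]; lra.
  - simpl ell. simpl length. rewrite Cmod_mult. rewrite <- tech_pow_Rmult.
    apply Rmult_le_compat. apply Cmod_ge_0. apply Cmod_ge_0.
    + eapply Rle_trans. apply aa_bound; auto. fold B.
      pose proof (pow_le1 (Cmod q) k ltac:(lra)). pose proof (pow_le (Cmod q) k H0).
      rewrite S_INR. pose proof (pos_INR k). nra.
    + apply IH.
  - simpl ell. simpl length. eapply Rle_trans. apply psum_bound with (M := ((B * INR k) ^ length w)%R).
    { intros j Hj. eapply Rle_trans. apply IH. apply pow_incr. split.
      apply Rmult_le_pos. lra. apply pos_INR.
      apply Rmult_le_compat_l. lra. apply le_INR. lia. }
    rewrite <- tech_pow_Rmult. apply Rmult_le_compat. apply pos_INR. apply pow_le.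
    apply Rmult_le_pos. lra. apply pos_INR.
    rewrite S_INR. pose proof (pos_INR k). nra.
    apply pow_incr. split. apply Rmult_le_pos. lra. apply pos_INR.
    apply Rmult_le_compat_l. lra. rewrite S_INR. lra.
Qed.

Lemma E1_cv q u v : (Cmod q < 1)%R -> cv (fun N => E1 q N u v) 0.
Proof.
  intros Hq. pose proof (B_ge1 q Hq) as HB. pose proof (Cmod_ge_0 q) as H0.
  set (B := (/ (1 - Cmod q))%R) in *. set (r := Cmod q) in *.
  set (p := (length u + length v + 3)%nat).
  apply cv_bound0 with (b := fun N => (B ^ p * ((INR N + 2) ^ p * r ^ N))%R).
  2:{ pose proof (is_lim_seq_mult' _ _ (B ^ p)%R 0%R (is_lim_seq_const (B ^ p)%R) (lim_pg p r ltac:(lra))) as H.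
      rewrite Rmult_0_r in H. exact H. }
  intros N. unfold E1. rewrite psum_shift. simpl ell at 1. rewrite aa0, !Cmult_0_l, Cplus_0_l.
  set (X := (B * (INR N + 2))%R).
  assert (HX1 : (1 <= X)%R). { unfold X. pose proof (pos_INR N). nra. }
  eapply Rle_trans. apply psum_bound with
    (M := (X ^ S (length u) * X ^ S (length v) * r ^ N)%R).
  - intros j Hj. rewrite !Cmod_mult.
    apply Rmult_le_compat. apply Rmult_le_pos; apply Cmod_ge_0. apply Cmod_ge_0.
    apply Rmult_le_compat. apply Cmod_ge_0. apply Cmod_ge_0.
    + eapply Rle_trans. apply (ell_bound q (true :: u) (S j) Hq). try fold B; try fold r; try fold B. simpl length.
      apply pow_incr. split. apply Rmult_le_pos. lra. apply pos_INR.
      unfold X. apply Rmult_le_compat_l. lra. rewrite !S_INR.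
      apply lt_INR in Hj. lra.
    + eapply Rle_trans. apply (ell_bound q (false :: v) (S N) Hq). try fold B; try fold r; try fold B. simpl length.
      unfold X. rewrite !S_INR. right. f_equal. f_equal. ring.
    + rewrite Cmod_pow. fold r. replace (S j * N)%nat with (N + j * N)%nat by lia.
      rewrite pow_add. pose proof (pow_le r N H0). pose proof (pow_le r (j * N) H0).
      pose proof (pow_le1 r (j * N) ltac:(lra)). nra.
  - assert (E : (B ^ p * ((INR N + 2) ^ p * r ^ N) = X * (X ^ S (length u) * X ^ S (length v)) * r ^ N)%R).
    { unfold X. rewrite <- pow_add. rewrite tech_pow_Rmult. unfold p.
      replace (S (S (length u) + S (length v))) with (length u + length v + 3)%nat by lia.
      rewrite Rpow_mult_distr. ring. }
    rewrite E. assert (INR N <= X)%R by (unfold X; pose proof (pos_INR N); nra).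
    pose proof (pow_le r N H0). assert (0 <= X ^ S (length u) * X ^ S (length v))%R.
    { apply Rmult_le_pos; apply pow_le; lra. }
    rewrite (Rmult_assoc X). apply Rmult_le_compat_r. apply Rmult_le_pos; auto. auto.
Qed.

Lemma S_cv q w : (Cmod q < 1)%R -> exists l, cv (fun N => psum (ell q (true :: w)) (S N)) l.
Proof.
  intros Hq. apply series_cv. pose proof (B_ge1 q Hq) as HB. pose proof (Cmod_ge_0 q) as H0.
  set (B := (/ (1 - Cmod q))%R) in *. set (r := Cmod q) in *.
  apply (@ex_series_le C_AbsRing C_CompleteNormedModule) with
    (b := fun n => (B ^ S (length w) * ((INR n + 2) ^ length w * r ^ n))%R).
  - intros n. change norm with Cmod. simpl ell. rewrite Cmod_mult.
    eapply Rle_trans. apply Rmult_le_compat. apply Cmod_ge_0. apply Cmod_ge_0.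
    apply aa_bound; auto. apply ell_bound; auto. try fold B; try fold r; try fold B.
    rewrite <- tech_pow_Rmult, Rpow_mult_distr.
    assert (INR (S n) ^ length w <= (INR n + 2) ^ length w)%R.
    { apply pow_incr. rewrite S_INR. pose proof (pos_INR n). lra. }
    pose proof (pow_le r n H0). pose proof (pow_le B (length w) ltac:(lra)).
    pose proof (pow_le (INR (S n)) (length w) (pos_INR _)).
    assert (0 <= B ^ length w * r ^ n)%R by (apply Rmult_le_pos; auto).
    replace (B * r ^ n * (B ^ length w * INR (S n) ^ length w))%R with
      ((B * (B ^ length w * r ^ n)) * INR (S n) ^ length w)%R by ring.
    replace (B * B ^ length w * ((INR n + 2) ^ length w * r ^ n))%R with
      ((B * (B ^ length w * r ^ n)) * (INR n + 2) ^ length w)%R by ring.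
    apply Rmult_le_compat_l; auto. apply Rmult_le_pos; lra.
  - apply (@ex_series_scal_l R_AbsRing R_NormedModule). apply ex_series_pg. lra.
Qed.

Lemma cv_minus u v a b : cv u a -> cv v b -> cv (fun n => u n - v n) (a - b).
Proof.
  intros Hu Hv eps He.
  destruct (Hu (eps/2)%R ltac:(lra)) as [N1 H1]. destruct (Hv (eps/2)%R ltac:(lra)) as [N2 H2].
  exists (N1 + N2)%nat. intros n Hn.
  replace (u n - v n - (a - b)) with ((u n - a) + - (v n - b)) by ring.
  eapply Rle_lt_trans. apply Cmod_triangle. rewrite Cmod_opp.
  specialize (H1 n ltac:(lia)). specialize (H2 n ltac:(lia)). lra.
Qed.

Lemma cv_const0 : cv (fun _ => 0) 0.
Proof. intros eps He. exists O. intros. replace (0 - 0) with (RtoC 0) by ring. rewrite Cmod_0. auto. Qed.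

Lemma chain q : (Cmod q < 1)%R -> forall u v,
  (v <> nil \/ exists u', u = true :: u') -> (u = nil \/ last u true = false) ->
  cv (fun N => DD q N u v - DD q N nil (rev (map negb u) ++ v)) 0.
Proof.
  intros Hq u. induction u as [|x u IH]; intros v Hv Hl.
  - apply cv_ext with (fun _ => 0); [|exact cv_const0]. intros n. cbn [rev map app]. ring.
  - destruct Hl as [Hl|Hl]; [discriminate|].
    destruct x.
    + destruct u as [|b u'] eqn:Eu. { simpl in Hl. discriminate. }
      rewrite <- Eu in *.
      assert (Hu : u <> nil) by (rewrite Eu; discriminate).
      assert (Hl' : u = nil \/ last u true = false).
      { right. rewrite Eu in *. exact Hl. }
      assert (Hfv : false :: v <> nil) by discriminate.
      specialize (IH (false :: v) (or_introl Hfv) Hl').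
      apply cv_ext with (fun N => (DD q N u (false :: v) - DD q N nil (rev (map negb u) ++ false :: v)) + E1 q N u v).
      { intros N. rewrite transA by auto.
        replace (rev (map negb (true :: u)) ++ v) with (rev (map negb u) ++ false :: v)
          by (simpl; rewrite <- app_assoc; reflexivity). ring. }
      replace (RtoC 0) with (0 + 0) by ring. apply cv_plus. exact IH. apply E1_cv. auto.
    + assert (Hv' : v <> nil). { destruct Hv as [H|[u' H]]; [auto|discriminate]. }
      assert (Hl' : u = nil \/ last u true = false).
      { destruct u as [|b u']. left; auto. right. exact Hl. }
      assert (Htv : true :: v <> nil) by discriminate.
      specialize (IH (true :: v) (or_introl Htv) Hl').
      apply cv_ext with (fun N => (DD q N u (true :: v) - DD q N nil (rev (map negb u) ++ true :: v)) - E1 q N v u).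
      { intros N. rewrite transY by auto.
        replace (rev (map negb (false :: u)) ++ v) with (rev (map negb u) ++ true :: v)
          by (simpl; rewrite <- app_assoc; reflexivity). ring. }
      replace (RtoC 0) with (0 - 0) by ring. apply cv_minus. exact IH. apply E1_cv. auto.
Qed.

Lemma duality q w : (Cmod q < 1)%R -> last (true :: w) true = false ->
  cv (fun N => psum (ell q (true :: w)) (S N) - psum (ell q (rev (map negb (true :: w)))) (S N)) 0.
Proof.
  intros Hq Hl.
  pose proof (chain q Hq (true :: w) nil (or_intror (ex_intro _ w eq_refl)) (or_intror Hl)) as H.
  refine (cv_ext _ _ _ _ H). intros N. rewrite DD_nil_r, DD_nil_l, app_nil_r. reflexivity.
Qed.

Lemma zq_trunc_cons q t s rest N : zq_trunc q ((t, s) :: rest) N =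
  psum (fun m => q ^ (S m * t) / (1 - q ^ (S m)) ^ s * zq_trunc q rest m) N.
Proof.
  induction N. reflexivity.
  change (zq_trunc q ((t, s) :: rest) (S N)) with
    (zq_trunc q ((t, s) :: rest) N + q ^ (S N * t) / (1 - q ^ (S N)) ^ s * zq_trunc q rest N).
  rewrite IHN. reflexivity.
Qed.

Lemma div_pow x n : 1 - x <> 0 -> x ^ n / (1 - x) ^ n = (x / (1 - x)) ^ n.
Proof.
  intros H. induction n. simpl. field.
  rewrite !Cpow_S, <- IHn. field. split; auto. apply Cpow_nz. auto.
Qed.

Fixpoint wd (ns : list nat) : list bool :=
  match ns with nil => nil | n :: ns' => repeat true n ++ false :: wd ns' end.

Lemma ell_repeat q n w k : ell q (repeat true n ++ w) k = aa q k ^ n * ell q w k.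
Proof. induction n; simpl. ring. rewrite IHn. ring. Qed.

Lemma ell_wd0 q n r : ell q (wd (n :: r)) 0 = 0.
Proof. apply ell_nonempty0. destruct n; simpl; discriminate. Qed.

Lemma trunc_wd q ns N : (Cmod q < 1)%R ->
  zq_trunc q (combine ns ns) N = psum (ell q (wd ns)) (S N).
Proof.
  intros Hq. revert N. induction ns as [|n ns IH]; intros N.
  - rewrite psum_shift. simpl. try (rewrite (psum_ext _ (fun _ => 0)) by auto). rewrite psum_zero. ring.
  - simpl combine. rewrite zq_trunc_cons. simpl wd. rewrite psum_shift.
    rewrite ell_repeat. simpl ell at 2. rewrite Cmult_0_r, Cplus_0_l.
    apply psum_ext. intros j _. rewrite ell_repeat, IH. simpl ell.
    rewrite Cpow_mult_r, div_pow by (apply Cpow_ne1; auto). reflexivity.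
Qed.

Lemma trunc_first q i r N : (Cmod q < 1)%R ->
  zq_trunc q (combine (i :: r) (S i :: r)) N =
  psum (ell q (wd (i :: r))) (S N) + psum (ell q (wd (S i :: r))) (S N).
Proof.
  intros Hq. simpl combine. rewrite zq_trunc_cons. rewrite !psum_shift.
  rewrite !ell_wd0, !Cplus_0_l.
  rewrite <- psum_plus. apply psum_ext. intros j _.
  change (wd (i :: r)) with (repeat true i ++ false :: wd r).
  change (wd (S i :: r)) with (repeat true (S i) ++ false :: wd r).
  rewrite !ell_repeat.
  change (ell q (false :: wd r) (S j)) with (psum (ell q (wd r)) (S j)).
  rewrite trunc_wd by auto. rewrite Cpow_mult_r. unfold aa.
  set (x := q ^ S j). assert (Hx : 1 - x <> 0) by (apply Cpow_ne1; auto).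
  rewrite (Cpow_S (x / (1 - x)) i), <- div_pow by auto. rewrite Cpow_S.
  field. split; auto. apply Cpow_nz; auto.
Qed.

Lemma cv_Clim_self u l : cv u l -> cv u (Clim_seq u).
Proof. intros H. rewrite (cv_Clim u l H). auto. Qed.

Definition LL q n r := Clim_seq (fun N => psum (ell q (wd (n :: r))) (S N)).

Lemma LL_cv q n r : (Cmod q < 1)%R -> (1 <= n)%nat ->
  cv (fun N => psum (ell q (wd (n :: r))) (S N)) (LL q n r).
Proof.
  intros Hq Hn. destruct n as [|n]; [lia|].
  destruct (S_cv q (repeat true n ++ false :: wd r) Hq) as [l Hl].
  unfold LL. apply cv_Clim_self with l. exact Hl.
Qed.

Lemma zq_first q j r : (Cmod q < 1)%R -> (2 <= j)%nat ->
  zq q ((j - 1)%nat :: r) (j :: r) = LL q (j - 1) r + LL q j r.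
Proof.
  intros Hq Hj. destruct j as [|i]; [lia|]. replace (S i - 1)%nat with i by lia.
  unfold zq. apply cv_Clim.
  apply cv_ext with (fun N => psum (ell q (wd (i :: r))) (S N) + psum (ell q (wd (S i :: r))) (S N)).
  { intros N. rewrite trunc_first by auto. reflexivity. }
  apply cv_plus; apply LL_cv; auto; lia.
Qed.

Lemma zq_one q r : (Cmod q < 1)%R -> zq q (1%nat :: r) (1%nat :: r) = LL q 1 r.
Proof.
  intros Hq. unfold zq. apply cv_Clim.
  apply cv_ext with (fun N => psum (ell q (wd (1%nat :: r))) (S N)).
  { intros N. rewrite trunc_wd by auto. reflexivity. }
  apply LL_cv; auto.
Qed.

Lemma m1_sq k : (- 1) ^ k * (- 1) ^ k = 1.
Proof. induction k. simpl. ring. rewrite !Cpow_S. transitivity ((-1)^k * (-1)^k). ring. exact IHk. Qed.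

Lemma Psi_eq q k r : (Cmod q < 1)%R -> (1 <= k)%nat -> Psi q k r = LL q k r.
Proof.
  intros Hq Hk. unfold Psi.
  assert (T : forall k, (1 <= k)%nat ->
    sum_n_m (fun j => (- 1) ^ j * zq q ((j - 1)%nat :: r) (j :: r)) 2 k = LL q 1 r + (- 1) ^ k * LL q k r).
  { intros m Hm. induction m as [|m IH]; [lia|].
    destruct m as [|m].
    - rewrite sum_n_m_zero by lia. simpl. change (@zero C_AbelianMonoid) with (RtoC 0). ring.
    - rewrite sum_n_Sm by lia. rewrite IH by lia.
      rewrite zq_first by (auto; lia). replace (S (S m) - 1)%nat with (S m) by lia.
      change (@plus C_AbelianMonoid) with Cplus. rewrite (Cpow_S _ (S m)).
      match goal with |- ?a = ?b => change (@eq C a b) end. ring. }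
  rewrite T by auto.
  replace ((-1) ^ k * (LL q 1 r + (-1) ^ k * LL q k r - zq q (1%nat :: r) (1%nat :: r)))
    with ((-1) ^ k * (-1) ^ k * LL q k r) by (rewrite zq_one by auto; ring).
  rewrite m1_sq. ring.
Qed.

Definition blk (a b : nat) : list bool := repeat true a ++ repeat false b.

Lemma wd_app a b : wd (a ++ b) = wd a ++ wd b.
Proof. induction a; simpl; auto. rewrite IHa, <- app_assoc. auto. Qed.

Lemma wd_zeros n : wd (zeros n) = repeat false n.
Proof. induction n; simpl; auto. unfold zeros in IHn. rewrite IHn. auto. Qed.

Lemma wd_block a b : (1 <= b)%nat -> wd (a :: zeros (b - 1)) = blk a b.
Proof.
  intros Hb. destruct b as [|b]; [lia|]. simpl wd.
  rewrite wd_zeros. unfold blk. rewrite Nat.sub_0_r. reflexivity.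
Qed.

Lemma wd_flat (f g : nat -> nat) s : (forall j, In j s -> (1 <= g j)%nat) ->
  wd (flat_map (fun j => f j :: zeros (g j - 1)) s) = flat_map (fun j => blk (f j) (g j)) s.
Proof.
  induction s as [|a s IH]; intros H; simpl; auto.
  rewrite <- IH by (intros; apply H; simpl; auto).
  rewrite <- wd_block by (apply H; simpl; auto).
  change (a :: zeros (g a - 1) ++ flat_map (fun j => f j :: zeros (g j - 1)) s) with
    ((f a :: zeros (g a - 1)) ++ flat_map (fun j => f j :: zeros (g j - 1)) s).
  simpl wd at 1.
  rewrite <- (wd_app (f a :: zeros (g a - 1))). reflexivity.
Qed.

Lemma rev_negb_blk a b : rev (map negb (blk a b)) = blk b a.
Proof.
  unfold blk. rewrite map_app, !map_repeat, rev_app_distr, !rev_repeat. reflexivity.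
Qed.

Lemma rev_negb_flat (f : nat -> list bool) s :
  rev (map negb (flat_map f s)) = flat_map (fun j => rev (map negb (f j))) (rev s).
Proof.
  induction s as [|a s IH]; simpl; auto.
  rewrite map_app, rev_app_distr, IH, flat_map_app. simpl. rewrite app_nil_r. auto.
Qed.

Lemma last_wd_gen ns : forall (x : list bool) d, last (x ++ false :: wd ns) d = false.
Proof.
  induction ns as [|n ns IH]; intros x d.
  - simpl. apply last_last.
  - simpl wd. replace (x ++ false :: repeat true n ++ false :: wd ns) with
      ((x ++ false :: repeat true n) ++ false :: wd ns) by (rewrite <- app_assoc; auto).
    apply IH.
Qed.

Theorem theorem8p5 (q : C) (l : nat) (alpha beta : nat -> nat) :
  (Cmod q < 1)%R ->
  (1 <= l)%nat ->
  (forall j, (1 <= j <= l)%nat -> (1 <= alpha j)%nat /\ (1 <= beta j)%nat) ->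
  Psi q (alpha 1%nat)
      (zeros (beta 1%nat - 1) ++
       flat_map (fun j => alpha j :: zeros (beta j - 1)) (seq 2 (l - 1)))
  =
  Psi q (beta l)
      (zeros (alpha l - 1) ++
       flat_map (fun j => beta j :: zeros (alpha j - 1)) (rev (seq 1 (l - 1)))).
Proof.
  intros Hq Hl Hab.
  destruct l as [|l']; [lia|]. replace (S l' - 1)%nat with l' by lia.
  pose proof (Hab 1%nat ltac:(lia)) as [Ha1 Hb1].
  pose proof (Hab (S l') ltac:(lia)) as [Hal Hbl].
  rewrite !Psi_eq by auto. unfold LL.
  set (rL := zeros (beta 1%nat - 1) ++ flat_map (fun j => alpha j :: zeros (beta j - 1)) (seq 2 l')).
  set (rR := zeros (alpha (S l') - 1) ++ flat_map (fun j => beta j :: zeros (alpha j - 1)) (rev (seq 1 l'))).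
  assert (EL : wd (alpha 1%nat :: rL) = flat_map (fun j => blk (alpha j) (beta j)) (seq 1 (S l'))).
  { unfold rL. change (alpha 1%nat :: zeros (beta 1%nat - 1) ++ flat_map (fun j => alpha j :: zeros (beta j - 1)) (seq 2 l'))
      with (flat_map (fun j => alpha j :: zeros (beta j - 1)) (seq 1 (S l'))).
    apply wd_flat. intros j Hj. apply in_seq in Hj. apply Hab. lia. }
  assert (ER : wd (beta (S l') :: rR) = flat_map (fun j => blk (beta j) (alpha j)) (rev (seq 1 (S l')))).
  { rewrite seq_S, rev_app_distr. simpl rev at 1. replace (1 + l')%nat with (S l') by lia.
    unfold rR. change (beta (S l') :: zeros (alpha (S l') - 1) ++ flat_map (fun j => beta j :: zeros (alpha j - 1)) (rev (seq 1 l')))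
      with (flat_map (fun j => beta j :: zeros (alpha j - 1)) (S l' :: rev (seq 1 l'))).
    apply wd_flat. intros j Hj. simpl in Hj. destruct Hj as [Hj|Hj].
    - subst. apply Hab. lia.
    - apply in_rev in Hj. apply in_seq in Hj. apply Hab. lia. }
  assert (Edual : wd (beta (S l') :: rR) = rev (map negb (wd (alpha 1%nat :: rL)))).
  { rewrite ER, EL, rev_negb_flat. apply flat_map_ext. intros j. rewrite rev_negb_blk. auto. }
  destruct (alpha 1%nat) as [|a'] eqn:Ea; [lia|].
  set (w := repeat true a' ++ false :: wd rL).
  assert (Ew : wd (S a' :: rL) = true :: w) by reflexivity.
  assert (Hlast : last (true :: w) true = false).
  { rewrite <- Ew. simpl wd. rewrite app_comm_cons.
    change (true :: repeat true a') with (repeat true (S a')).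
    apply last_wd_gen. }
  pose proof (LL_cv q (S a') rL Hq ltac:(lia)) as HcL. unfold LL in HcL.
  pose proof (duality q w Hq Hlast) as Hd.
  rewrite <- Ew, <- Edual in Hd.
  symmetry. apply cv_Clim. eapply cv_diff. exact HcL. exact Hd.
Qed.
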